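(* Let $G$ be a group and let $A$ and $B$ be torsion-free abelian subgroups of $G$ such that each of $A$ and $B$ has finite index in $G$, is normal in $G$, and is a maximal abelian subgroup of $G$. Then $A=B$.
   Context: A subgroup is maximal abelian if it is abelian and is not properly contained in any abelian subgroup of $G$. *)

(* Defs.v *)
(* abstract (possibly infinite) groups; MathComp's finite groups
   would trivialize torsion-freeness. *)
From Stdlib Require Import List.

Record Group := {
  carrier :> Type;
  gmul : carrier -> carrier -> carrier;
  ginv : carrier -> carrier;
  gone : carrier;
  gmul_assoc : forall x y z, gmul x (gmul y z) = gmul (gmul x y) z;
  gmul_one_l : forall x, gmul gone x = x;
  gmul_one_r : forall x, gmul x gone = x;
  gmul_inv_l : forall x, gmul (ginv x) x = gone;
  gmul_inv_r : forall x, gmul x (ginv x) = gone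
}.

Section GroupDefs.
Variable G : Group.

Fixpoint gpow (x : G) (n : nat) : G :=
  match n with O => gone G | S m => gmul G x (gpow x m) end.

Definition is_subgroup (H : G -> Prop) : Prop :=
  H (gone G) /\ (forall x y, H x -> H y -> H (gmul G x y)) /\
  (forall x, H x -> H (ginv G x)).

Definition is_abelian (H : G -> Prop) : Prop :=
  forall x y, H x -> H y -> gmul G x y = gmul G y x.

Definition torsion_free (H : G -> Prop) : Prop :=
  forall x n, H x -> gpow x (S n) = gone G -> x = gone G.

(* finitely many left cosets h H cover G *)
Definition finite_index (H : G -> Prop) : Prop :=
  exists l : list G, forall g, exists h, In h l /\ H (gmul G (ginv G h) g).

Definition is_normal (H : G -> Prop) : Prop :=
  forall g x, H x -> H (gmul G (gmul G g x) (ginv G g)).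

Definition maximal_abelian (H : G -> Prop) : Prop :=
  is_subgroup H /\ is_abelian H /\
  forall K : G -> Prop, is_subgroup K -> is_abelian K ->
    (forall x, H x -> K x) -> forall x, K x -> H x.
End GroupDefs.

(* Main.v *)
Require Import Defs.
From Stdlib Require Import List Arith Lia Classical ClassicalEpsilon.

Section S.
Variable G : Group.
Local Notation "x * y" := (gmul G x y).
Local Notation "1" := (gone G).
Local Notation inv := (ginv G).

Lemma gpow_add (x : G) n m : gpow G x (n + m) = gpow G x n * gpow G x m.
Proof.
  induction n; simpl. now rewrite gmul_one_l.
  now rewrite IHn, gmul_assoc.
Qed.

Lemma mul_inv_cancel_l (x y : G) : inv x * (x * y) = y.
Proof. now rewrite gmul_assoc, gmul_inv_l, gmul_one_l. Qed.

Lemma comm_pow (x y : G) n : x * y = y * x -> x * gpow G y n = gpow G y n * x.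
Proof.
  intro H; induction n; simpl. now rewrite gmul_one_l, gmul_one_r.
  now rewrite gmul_assoc, H, <- gmul_assoc, IHn, gmul_assoc.
Qed.

Lemma pow_mul (x y : G) n : x * y = y * x ->
  gpow G (x * y) n = gpow G x n * gpow G y n.
Proof.
  intro H; induction n; simpl. now rewrite gmul_one_l.
  rewrite IHn.
  assert (Hc : y * gpow G x n = gpow G x n * y).
  { apply comm_pow; symmetry; exact H. }
  rewrite <- !gmul_assoc; f_equal.
  now rewrite !gmul_assoc, Hc.
Qed.

Lemma pow_conj (b a : G) n : gpow G (b * a * inv b) n = b * gpow G a n * inv b.
Proof.
  induction n; simpl. now rewrite gmul_one_r, gmul_inv_r.
  rewrite IHn.
  rewrite <- !gmul_assoc. f_equal. f_equal.
  apply mul_inv_cancel_l.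
Qed.

Lemma pow_sub (H : G -> Prop) x n : is_subgroup G H -> H x -> H (gpow G x n).
Proof. intros [h1 [h2 h3]] Hx; induction n; simpl; auto. Qed.

Lemma pig_step (B : G -> Prop) (a h : G) i d : is_subgroup G B ->
  B (inv h * gpow G a i) -> B (inv h * gpow G a (i + S d)) -> B (gpow G a (S d)).
Proof.
  intros [_ [m2 m3]] Bi Bj.
  rewrite gpow_add, gmul_assoc in Bj.
  pose proof (m2 _ _ (m3 _ Bi) Bj) as K.
  now rewrite mul_inv_cancel_l in K.
Qed.

Lemma pigeon (B : G -> Prop) (a : G) : is_subgroup G B -> finite_index G B ->
  exists n, B (gpow G a (S n)).
Proof.
  intros HB [l Hl].
  assert (Hf : exists f : nat -> G, forall i, In (f i) l /\ B (inv (f i) * gpow G a i)).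
  { exists (fun i => proj1_sig (constructive_indefinite_description _ (Hl (gpow G a i)))).
    intro i. exact (proj2_sig (constructive_indefinite_description _ (Hl (gpow G a i)))). }
  destruct Hf as [f Hf].
  apply NNPP; intro Hno.
  assert (Hnd : NoDup (map f (seq 0 (S (length l))))).
  { apply NoDup_map_NoDup_ForallPairs; [|apply seq_NoDup].
    intros i j _ _ Hij.
    destruct (Nat.lt_trichotomy i j) as [Hlt|[Heq|Hlt]]; auto; exfalso; apply Hno.
    - exists (j - i - 1).
      destruct (Hf i) as [_ Bi]; destruct (Hf j) as [_ Bj].
      replace (gpow G a j) with (gpow G a (i + S (j - i - 1))) in Bj by (f_equal; lia).
      rewrite Hij in Bi.
      exact (pig_step B a (f j) i _ HB Bi Bj).
    - exists (i - j - 1).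
      destruct (Hf i) as [_ Bi]; destruct (Hf j) as [_ Bj].
      replace (gpow G a i) with (gpow G a (j + S (i - j - 1))) in Bi by (f_equal; lia).
      rewrite Hij in Bi.
      exact (pig_step B a (f j) j _ HB Bj Bi). }
  pose proof (NoDup_incl_length (l' := l) Hnd) as Hlen.
  rewrite length_map, length_seq in Hlen.
  assert (incl (map f (seq 0 (S (length l)))) l).
  { intros h Hh. apply in_map_iff in Hh. destruct Hh as [i [<- _]]. apply Hf. }
  specialize (Hlen H). lia.
Qed.

Lemma comm_AB (A B : G -> Prop) (a b : G) :
  is_subgroup G A -> is_subgroup G B -> is_abelian G A -> is_abelian G B ->
  torsion_free G A -> finite_index G B -> is_normal G A ->
  A a -> B b -> a * b = b * a.
Proof.
  intros sA sB abA abB tA fB nA Ha Hb.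
  destruct (pigeon B a sB fB) as [n Hn].
  set (c := b * a * inv b).
  assert (Hc : A c) by (apply nA; auto).
  destruct sA as [a1 [a2 a3]].
  assert (Hcn : gpow G c (S n) = gpow G a (S n)).
  { unfold c; rewrite pow_conj, <- gmul_assoc, (abB _ _ Hn (proj2 (proj2 sB) _ Hb)).
    now rewrite gmul_assoc, gmul_inv_r, gmul_one_l. }
  assert (Hai : gpow G a (S n) * gpow G (inv a) (S n) = 1).
  { rewrite <- pow_mul by (apply abA; auto).
    rewrite gmul_inv_r. clear. induction (S n); simpl; auto. rewrite IHn0. apply gmul_one_l. }
  assert (Ht : c * inv a = 1).
  { apply (tA _ n). apply a2; auto.
    rewrite pow_mul by (apply abA; auto). now rewrite Hcn. }
  assert (Hca : c = a).
  { rewrite <- (gmul_one_r G c), <- (gmul_inv_l G a), gmul_assoc, Ht. apply gmul_one_l. }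
  unfold c in Hca.
  symmetry. rewrite <- Hca at 2. rewrite <- (gmul_assoc G (b*a) (inv b) b), gmul_inv_l, gmul_one_r. reflexivity.
Qed.

Lemma rearr (a b a' b' : G) : b * a' = a' * b ->
  (a * b) * (a' * b') = (a * a') * (b * b').
Proof.
  intro H. rewrite <- !gmul_assoc. f_equal. rewrite !gmul_assoc. now rewrite H.
Qed.

Lemma incl_AB (A B : G -> Prop) :
  is_subgroup G A -> is_subgroup G B -> is_abelian G B ->
  (forall a b, A a -> B b -> a * b = b * a) ->
  maximal_abelian G A -> forall x, B x -> A x.
Proof.
  intros [a1 [a2 a3]] [b1 [b2 b3]] abB Hc [_ [abA mA]] x Hx.
  set (K := fun z => exists a b, A a /\ B b /\ z = a * b).
  apply (mA K).
  - split; [|split].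
    + exists 1, 1. repeat split; auto. now rewrite gmul_one_l.
    + intros z w [a [b [Ha [Hb ->]]]] [a' [b' [Ha' [Hb' ->]]]].
      exists (a * a'), (b * b'). repeat split; auto.
      rewrite <- !gmul_assoc. f_equal. rewrite !gmul_assoc. f_equal. symmetry; auto.
    + intros z [a [b [Ha [Hb ->]]]].
      exists (inv a), (inv b). repeat split; auto.
      assert (P : (a * b) * (inv a * inv b) = 1).
      { rewrite rearr by (symmetry; apply Hc; auto). now rewrite !gmul_inv_r, gmul_one_l. }
      transitivity (inv (a*b) * ((a*b)*(inv a*inv b))).
      { now rewrite P, gmul_one_r. }
      apply mul_inv_cancel_l.
  - intros z w [a [b [Ha [Hb ->]]]] [a' [b' [Ha' [Hb' ->]]]].
    rewrite (rearr a b a' b'), (rearr a' b' a b) by (symmetry; auto).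
    now rewrite (abA a a'), (abB b b').
  - intros z Hz. exists z, 1. repeat split; auto. now rewrite gmul_one_r.
  - exists 1, x. repeat split; auto. now rewrite gmul_one_l.
Qed.

Theorem mainTheorem1_aux (A B : G -> Prop) :
  is_subgroup G A -> is_subgroup G B ->
  is_abelian G A -> is_abelian G B ->
  torsion_free G A -> torsion_free G B ->
  finite_index G A -> finite_index G B ->
  is_normal G A -> is_normal G B ->
  maximal_abelian G A -> maximal_abelian G B ->
  forall x, A x <-> B x.
Proof.
  intros sA sB abA abB tA tB fA fB nA nB mA mB x.
  assert (Hc : forall a b, A a -> B b -> a * b = b * a)
    by (intros a b Ha Hb; exact (comm_AB A B a b sA sB abA abB tA fB nA Ha Hb)).
  split.
  - apply (incl_AB B A); auto. intros b a Hb Ha. symmetry; auto.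
  - apply (incl_AB A B); auto.
Qed.
End S.

Theorem mainTheorem1 (G : Group) (A B : G -> Prop) :
  is_subgroup G A -> is_subgroup G B ->
  is_abelian G A -> is_abelian G B ->
  torsion_free G A -> torsion_free G B ->
  finite_index G A -> finite_index G B ->
  is_normal G A -> is_normal G B ->
  maximal_abelian G A -> maximal_abelian G B ->
  forall x, A x <-> B x.
Proof. exact (mainTheorem1_aux G A B). Qed.
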